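(* Let $x,y\in K^\vee\setminus K$ and let $\pi:K^\vee\to K^\vee/K$ be the canonical quotient map, where $K^\vee$ is regarded as a $K$-normed space with norm $|\cdot|$ and $K^\vee/K$ carries the quotient norm $\|\pi(z)\|=d(z,K)$. Then $x\nsim y$ if and only if $\{\pi(x),\pi(y)\}$ is an orthogonal set in $K^\vee/K$.
   Context: $K$ is a complete non-archimedean non-trivially valued field which is not spherically complete; $K^\vee$ is a fixed spherically complete valued field which is an immediate extension of $K$. For $a\in K^\vee$ and $X\subseteq K^\vee$, $d(a,X)=\inf_{x\in X}|a-x|$. For $x,y\in K^\vee\setminus K$, $x\sim y$ (''equivalent'') means there exist $\lambda,\mu\in K$ with $|\lambda x+\mu-y|\le d(y,K)$. A subset $S$ of a normed space not containing $0$ is orthogonal if $\|\sum_i\lambda_is_i\|=\max_i\|\lambda_is_i\|$ for all finitely many distinct $s_i\in S$ and $\lambda_i\in K$. *)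

(* Defs.v *)
From HB Require Import structures.
From mathcomp Require Import all_boot all_algebra.
From mathcomp Require Import all_classical all_reals.
Set Implicit Arguments. Unset Strict Implicit. Unset Printing Implicit Defensive.
Import GRing.Theory Num.Theory.
Local Open Scope ring_scope.
Local Open Scope classical_set_scope.

(* Setting: L plays the role of K^vee, a field with a (real-valued) absolute
   value [abs]; K is a subfield of L, given as a subset. *)
Section Defs.
Variables (R : realType) (L : fieldType) (abs : L -> R).

Definition nonarch_abs : Prop :=
  [/\ forall x, 0 <= abs x,
      forall x, abs x = 0 <-> x = 0,
      forall x y, abs (x * y) = abs x * abs y
    & forall x y, abs (x + y) <= Num.max (abs x) (abs y)].

Definition subfield (K : set L) : Prop :=
  [/\ K 0, K 1, (forall a b, K a -> K b -> K (a - b)),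
      (forall a b, K a -> K b -> K (a * b))
    & forall a, K a -> K a^-1].

Definition complete_in (K : set L) : Prop :=
  forall u : nat -> L, (forall n, K (u n)) ->
   (forall e : R, 0 < e -> exists N, forall m n, (N <= m)%N -> (N <= n)%N ->
       abs (u m - u n) < e) ->
   exists l, K l /\ forall e : R, 0 < e -> exists N, forall n, (N <= n)%N ->
       abs (u n - l) < e.

Definition nontrivially_valued (K : set L) : Prop :=
  exists a, K a /\ abs a <> 0 /\ abs a <> 1.

Definition spherically_complete (K : set L) : Prop :=
  forall (c : nat -> L) (r : nat -> R),
    (forall n, K (c n)) -> (forall n, 0 < r n) ->
    (forall n z, K z -> abs (z - c n.+1) <= r n.+1 -> abs (z - c n) <= r n) ->
    exists z, K z /\ forall n, abs (z - c n) <= r n.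

(* L is an immediate extension of K: same value group, same residue field *)
Definition immediate (K : set L) : Prop :=
  (forall x, x != 0 -> exists a, K a /\ abs a = abs x) /\
  (forall x, abs x <= 1 -> exists a, K a /\ abs (x - a) < 1).

Definition distK (K : set L) (z : L) : R := inf [set abs (z - a) | a in K].

Definition equivK (K : set L) (x y : L) : Prop :=
  exists la mu, K la /\ K mu /\ abs (la * x + mu - y) <= distK K y.

(* The pair (pi x, pi y) is orthogonal in the quotient K-normed space L/K,
   with quotient norm ||pi z|| = d(z, K); written out through pi, using
   lambda pi(x) + mu pi(y) = pi(lambda x + mu y). "Not containing 0" means
   pi x <> 0, pi y <> 0, i.e. x, y not in K. *)
Definition orthogonal_pair (K : set L) (x y : L) : Prop :=
  ~ K x /\ ~ K y /\
  forall la mu, K la -> K mu ->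
    distK K (la * x + mu * y) = Num.max (distK K (la * x)) (distK K (mu * y)).

End Defs.

(* Main.v *)
Require Import Defs.
From mathcomp Require Import all_boot all_order all_algebra.
From mathcomp Require Import all_classical all_reals.
From mathcomp Require Import ring lra.
Set Implicit Arguments. Unset Strict Implicit.
Import GRing.Theory Num.Theory Order.TTheory.
Local Open Scope ring_scope.
Local Open Scope classical_set_scope.

Lemma abs1 (R : realType) (L : fieldType) (abs : L -> R) :
  nonarch_abs abs -> abs 1 = 1.
Proof.
case=> h0 h1 hM _.
have n0 : abs 1 != 0 by apply/eqP => /h1/eqP; rewrite oner_eq0.
have := hM 1 1; rewrite mulr1 => e.
by apply: (mulfI n0); rewrite mulr1 -e.
Qed.

Lemma absN1 (R : realType) (L : fieldType) (abs : L -> R) :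
  nonarch_abs abs -> abs (-1) = 1.
Proof.
move=> H; have a1 := abs1 H; case: H => h0 h1 hM _.
have := hM (-1) (-1); rewrite mulrNN mulr1 a1 => e.
have : (abs (-1) - 1) * (abs (-1) + 1) = 0 by rewrite mulrBl !mulrDr -e; ring.
move/eqP; rewrite mulf_eq0 => /orP[]; first by rewrite subr_eq0 => /eqP.
by move=> /eqP hh; have := h0 (-1); have : (0:R) < 1 by []; lra.
Qed.

Lemma absN (R : realType) (L : fieldType) (abs : L -> R) x :
  nonarch_abs abs -> abs (- x) = abs x.
Proof.
move=> H; have a1 := absN1 H; case: H => _ _ hM _.
by rewrite -mulN1r hM a1 mul1r.
Qed.

Lemma absV (R : realType) (L : fieldType) (abs : L -> R) x :
  nonarch_abs abs -> x != 0 -> abs (x^-1) = (abs x)^-1.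
Proof.
move=> H xn0; have a1 := abs1 H; case: H => h0 h1 hM _.
have n0 : abs x != 0 by apply/eqP => /h1/eqP; rewrite (negbTE xn0).
have := hM x x^-1; rewrite mulfV // a1 => e.
by apply: (mulfI n0); rewrite -e mulfV.
Qed.

Lemma ultra3 (R : realType) (L : fieldType) (abs : L -> R) a b c :
  nonarch_abs abs -> abs (a - c) <= Num.max (abs (a - b)) (abs (b - c)).
Proof.
case=> _ _ _ hD; have -> : a - c = (a - b) + (b - c) by ring.
exact: hD.
Qed.

Lemma subK (L : fieldType) (K : set L) : subfield K ->
  [/\ forall a, K a -> K (- a), forall a b, K a -> K b -> K (a + b),
      forall a b, K a -> K b -> K (a * b) & forall a b, K a -> K b -> K (a / b)].
Proof.
case=> K0 K1 KB KM KV.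
have KN : forall a, K a -> K (- a) by move=> a Ka; rewrite -sub0r; apply: KB.
split => // a b Ka Kb; first by rewrite -[b]opprK; apply: KB => //; apply: KN.
by apply: KM => //; apply: KV.
Qed.

Lemma dist_le (R : realType) (L : fieldType) (abs : L -> R) (K : set L) z a :
  nonarch_abs abs -> K a -> distK abs K z <= abs (z - a).
Proof.
case=> h0 _ _ _ Ka; apply: ge_inf; last by exists a.
by exists 0 => _ [b _ <-].
Qed.

Lemma dist_ge0 (R : realType) (L : fieldType) (abs : L -> R) (K : set L) z :
  nonarch_abs abs -> subfield K -> 0 <= distK abs K z.
Proof.
case=> h0 _ _ _ [K0 _ _ _ _]; apply: lb_le_inf; first by exists (abs (z - 0)), 0.
by move=> _ [b _ <-].
Qed.

Lemma dist_lt (R : realType) (L : fieldType) (abs : L -> R) (K : set L) z r :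
  subfield K -> distK abs K z < r -> exists2 a, K a & abs (z - a) < r.
Proof.
move=> [K0 _ _ _ _] /inf_lt [].
  by exists (abs (z - 0)), 0.
by move=> _ [a Ka <-] h; exists a.
Qed.

Lemma dist_lb (R : realType) (L : fieldType) (abs : L -> R) (K : set L) z r :
  subfield K -> (forall a, K a -> r <= abs (z - a)) -> r <= distK abs K z.
Proof.
move=> [K0 _ _ _ _] h; apply: lb_le_inf; first by exists (abs (z - 0)), 0.
by move=> _ [b Kb <-]; apply: h.
Qed.

Lemma abs0 (R : realType) (L : fieldType) (abs : L -> R) :
  nonarch_abs abs -> abs 0 = 0.
Proof. by case=> _ h1 _ _; apply/h1. Qed.

Lemma abs_gt0 (R : realType) (L : fieldType) (abs : L -> R) x :
  nonarch_abs abs -> x != 0 -> 0 < abs x.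
Proof.
case=> h0 h1 _ _ xn0; rewrite lt_neqAle h0 andbT eq_sym; apply/eqP => /h1 /eqP.
by rewrite (negbTE xn0).
Qed.

Lemma dist_M_le (R : realType) (L : fieldType) (abs : L -> R) (K : set L) z mu :
  nonarch_abs abs -> subfield K -> K mu ->
  distK abs K (mu * z) <= abs mu * distK abs K z.
Proof.
move=> H HK Kmu; have [_ _ KM _] := subK HK.
have [h0 h1 hM hD] := H.
have [->|mun0] := eqVneq mu 0.
  have K0 : K 0 by case: HK.
  by have := dist_le (0 * z) H K0; rewrite mul0r subr0 abs0 // mul0r.
rewrite leNgt; apply/negP => hlt.
have amu := abs_gt0 H mun0.
have : distK abs K z < distK abs K (mu * z) / abs mu by rewrite ltr_pdivlMr // mulrC.
case/(dist_lt HK) => a Ka.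
rewrite ltr_pdivlMr // mulrC -hM mulrBr => hh.
have := dist_le (mu * z) H (KM _ _ Kmu Ka); lra.
Qed.

Lemma dist_N (R : realType) (L : fieldType) (abs : L -> R) (K : set L) z :
  nonarch_abs abs -> subfield K -> distK abs K (- z) = distK abs K z.
Proof.
move=> H HK; have K1 : K (-1) by have [KN _ _ _] := subK HK; apply: KN; case: HK.
have e1 := dist_M_le z H HK K1; have e2 := dist_M_le (-z) H HK K1.
rewrite absN1 // !mul1r !mulN1r ?opprK in e1 e2.
by apply/eqP; rewrite eq_le e1 e2.
Qed.

Lemma dist_shift (R : realType) (L : fieldType) (abs : L -> R) (K : set L) z a :
  nonarch_abs abs -> subfield K -> K a -> distK abs K (z + a) <= distK abs K z.
Proof.
move=> H HK Ka; have [_ KD _ _] := subK HK.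
apply: dist_lb => // b Kb.
have := dist_le (z + a) H (KD _ _ Kb Ka).
have -> : z + a - (b + a) = z - b by ring.
by [].
Qed.

Lemma dist_ultra (R : realType) (L : fieldType) (abs : L -> R) (K : set L) u v :
  nonarch_abs abs -> subfield K ->
  distK abs K (u + v) <= Num.max (distK abs K u) (distK abs K v).
Proof.
move=> H HK; have [_ KD _ _] := subK HK; have [h0 h1 hM hD] := H.
rewrite leNgt gt_max; apply/negP => /andP[hu hv].
case: (dist_lt HK hu) => a Ka ha; case: (dist_lt HK hv) => b Kb hb.
have := dist_le (u + v) H (KD _ _ Ka Kb).
have -> : u + v - (a + b) = (u - a) + (v - b) by ring.
have := hD (u - a) (v - b); rewrite le_max.
case/orP => h; lra.
Qed.

Lemma small_inv (R : realType) (e : R) : 0 < e ->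
  exists N, forall n, (N <= n)%N -> (n.+1%:R)^-1 < e.
Proof.
move=> e0; exists (Num.truncn e^-1) => n hn.
have h := truncnS_gt (e^-1).
have : (Num.truncn e^-1).+1%:R <= n.+1%:R :> R by rewrite ler_nat ltnS.
move=> h2.
rewrite invf_plt ?posrE //; lra.
Qed.

Lemma dist_pos (R : realType) (L : fieldType) (abs : L -> R) (K : set L) y :
  nonarch_abs abs -> subfield K -> complete_in abs K -> ~ K y ->
  0 < distK abs K y.
Proof.
move=> H HK Hc Ky; have [h0 h1 hM hD] := H.
rewrite lt_neqAle dist_ge0 // andbT; apply/negP => /eqP d0.
have : forall n : nat, exists a, K a /\ abs (y - a) < (n.+1%:R)^-1.
  move=> n; have : distK abs K y < (n.+1%:R)^-1 by rewrite -d0 invr_gt0 ltr0n.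
  by case/(dist_lt HK) => a Ka ha; exists a.
case/choice => u hu.
have Cu : forall e : R, 0 < e -> exists N, forall m n, (N <= m)%N -> (N <= n)%N ->
       abs (u m - u n) < e.
  move=> e e0; case: (small_inv e0) => N hN; exists N => m n hm hn.
  have := ultra3 (u m) y (u n) H.
  have -> : abs (u m - y) = abs (y - u m) by rewrite -(absN _ H) opprB.
  have := (hu m).2; have := (hu n).2; have := hN _ hm; have := hN _ hn.
  rewrite le_max => a1 a2 a3 a4 /orP[] a5.
    by apply: (le_lt_trans a5); apply: lt_trans a4 a2.
  by apply: (le_lt_trans a5); apply: lt_trans a3 a1.
case: (Hc u (fun n => (hu n).1) Cu) => l [Kl hl].
apply: Ky; suff : abs (y - l) = 0 by move/h1/eqP; rewrite subr_eq0 => /eqP ->.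
apply/eqP; rewrite eq_le h0 andbT leNgt; apply/negP => pos.
case: (hl _ pos) => N1 hN1; case: (small_inv pos) => N2 hN2.
have := ultra3 y (u (maxn N1 N2)) l H.
have := hN1 (maxn N1 N2) (leq_maxl _ _); have := hN2 (maxn N1 N2) (leq_maxr _ _).
have := (hu (maxn N1 N2)).2.
rewrite le_max => a1 a2 a3 /orP[] a4.
  by have := lt_le_trans (lt_trans a1 a2) a4; rewrite ltxx.
by have := lt_le_trans a3 a4; rewrite ltxx.
Qed.

Unset Implicit Arguments.

Theorem mainTheorem2 (R : realType) (L : fieldType) (abs : L -> R) (K : set L) :
  nonarch_abs abs -> subfield K -> complete_in abs K ->
  nontrivially_valued abs K -> ~ spherically_complete abs K ->
  spherically_complete abs setT -> immediate abs K ->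
  forall x y : L, ~ K x -> ~ K y ->
    (~ equivK abs K x y <-> orthogonal_pair abs K x y).
Proof.
move=> H HK Hc _ _ _ Himm x y Kx Ky.
have [KN KD KM KDiv] := subK HK; have [K0 K1 KB _ KV] := HK.
have [h0 h1 hM hD] := H.
have dy := dist_pos H HK Hc Ky.
split.
- move=> ne; split; first done; split; first done.
  move=> la mu Kla Kmu.
  set u := la * x; set v := mu * y.
  apply/eqP; rewrite eq_le dist_ultra //= leNgt; apply/negP => hlt.
  have hu : distK abs K u <= Num.max (distK abs K (u + v)) (distK abs K v).
    have := dist_ultra (u + v) (- v) H HK; rewrite addrK dist_N //.
  have key : distK abs K (u + v) < distK abs K v.
    move: hlt; rewrite lt_max => /orP[] // h.
    move: hu; rewrite le_max => /orP[] h2.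
      by have := lt_le_trans h h2; rewrite ltxx.
    exact: lt_le_trans h h2.
  have hv := dist_M_le y H HK Kmu.
  have [mu0|mun0] := eqVneq mu 0.
    move: hv key; rewrite /v mu0 abs0 // !mul0r => hv key.
    have h := dist_ge0 (u + 0) H HK.
    by have := le_lt_trans h (lt_le_trans key hv); rewrite ltxx.
  have amu := abs_gt0 H mun0.
  have [a Ka ha] := dist_lt HK (lt_le_trans key hv).
  apply: ne; exists (- la / mu), (a / mu); split; first by apply: KDiv => //; apply: KN.
  split; first exact: KDiv.
  have -> : - la / mu * x + a / mu - y = (u + v - a) * (- mu^-1).
    rewrite /u /v; field; exact: mun0.
  rewrite hM absN // absV // ler_pdivrMr //; apply: ltW; by rewrite mulrC.
- move=> [_ [_ ho]] [la [mu [Kla [Kmu hz]]]].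
  set z := la * x + mu - y in hz.
  have e1 := ho la (-1) Kla (KN 1 K1).
  have s1 : distK abs K y <= distK abs K (la * x + -1 * y).
    by rewrite e1 le_max mulN1r dist_N // lexx orbT.
  have eq : la * x + -1 * y = z + - mu by rewrite /z; ring.
  rewrite eq in s1.
  have s2 := dist_shift z H HK (KN _ Kmu).
  have s3 := dist_le z H K0; rewrite subr0 in s3.
  have dz : distK abs K z = abs z.
    apply/eqP; rewrite eq_le s3 /=; exact: le_trans hz (le_trans s1 s2).
  have zn0 : z != 0.
    apply/eqP => z0; have := le_trans s1 s2; rewrite dz z0 abs0 // => hh.
    by have := lt_le_trans dy hh; rewrite ltxx.
  have [b [Kb hb]] := Himm.1 z zn0.
  have bn0 : b != 0 by apply/eqP => b0; move: hb; rewrite b0 abs0 // => /esym/h1/eqP; rewrite (negbTE zn0).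
  have azb : abs (z / b) <= 1 by rewrite hM absV // hb mulfV // gt_eqF // abs_gt0.
  have [c [Kc hc]] := Himm.2 _ azb.
  have := dist_le z H (KM _ _ Kb Kc).
  have -> : z - b * c = b * (z / b - c) by field.
  rewrite hM dz hb => hh.
  have : abs z * abs (z / b - c) < abs z * 1 by rewrite ltr_pM2l // abs_gt0.
  by rewrite mulr1 => hh2; have := le_lt_trans hh hh2; rewrite ltxx.
Qed.
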